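(* If a topological space $X$ has a countable $\mathsf{cs}^\bullet$-network at a point $x\in X$, then $X$ is $(\omega_1,\omega)_p$-equiconvergent at $x$.
   Context: A family $\mathcal N$ of subsets of $X$ is a $\mathsf{cs}^\bullet$-network at $x$ if for every neighborhood $O_x$ of $x$ and every sequence $(x_n)_{n\in\omega}$ converging to $x$ there is $N\in\mathcal N$ with $N\subseteq O_x$ and $x_n\in N$ for some $n$. $X$ is $(\omega_1,\omega)_p$-equiconvergent at $x$ if for every indexed family $\{x_\alpha\}_{\alpha\in\omega_1}$ of sequences in $X^\omega$ converging to $x$ there is a countably infinite $\Lambda\subseteq\omega_1$ such that for every neighborhood $O_x$ of $x$ there is $n\in\omega$ with $\{\alpha\in\Lambda: x_\alpha(n)\notin O_x\}$ finite. *)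

(* Defs.v *)
From HB Require Import structures.
From mathcomp Require Import all_boot all_order all_algebra.
From mathcomp Require Import all_classical all_reals all_analysis.
Set Implicit Arguments. Unset Strict Implicit. Unset Printing Implicit Defensive.
Local Open Scope classical_set_scope.

Definition cs_bullet_network_at {X : topologicalType} (NN : set (set X)) (x : X) :=
  forall (O : set X), nbhs x O ->
  forall (s : nat -> X), s @ \oo --> x ->
  exists2 N, NN N & (N `<=` O /\ exists n, N (s n)).

(* (I, lt) is (order-isomorphic to) omega_1, the first uncountable ordinal:
   a strict well-order which is uncountable and all of whose proper initial
   segments are countable. *)
Definition is_omega1 (I : Type) (lt : I -> I -> Prop) :=
  well_founded lt /\
  (forall i j k, lt i j -> lt j k -> lt i k) /\
  (forall i, ~ lt i i) /\
  (forall i j, [\/ lt i j, i = j | lt j i]) /\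
  ~ countable [set: I] /\
  (forall i, countable [set j | lt j i]).

Definition equiconvergent_w1_w_at {X : topologicalType} (x : X) :=
  forall (I : Type) (lt : I -> I -> Prop), is_omega1 lt ->
  forall (s : I -> nat -> X), (forall a, s a @ \oo --> x) ->
  exists L : set I, countable L /\ infinite_set L /\
    (forall O : set X, nbhs x O ->
      exists n : nat, finite_set [set a | L a /\ ~ O (s a n)]).

(* Main.v *)
Require Import Defs.
From HB Require Import structures.
From mathcomp Require Import all_boot all_order all_algebra.
From mathcomp Require Import all_classical all_reals all_analysis.
Local Open Scope classical_set_scope.

Lemma countableU2 T (A B : set T) : countable A -> countable B -> countable (A `|` B).
Proof.
move=> cA cB.
have := bigcup_countable (countableP [set: bool]) (F := fun b => if b then A else B).
move=> /(_ (fun b _ => if b as b0 return countable (if b0 then A else B) then cA else cB)).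
apply: sub_countable; apply: subset_card_le => z [Az|Bz]; first by exists true.
by exists false.
Qed.

Theorem theorem4p2 (X : topologicalType) (x : X) :
  (exists NN : set (set X), countable NN /\ cs_bullet_network_at NN x) ->
  equiconvergent_w1_w_at x.
Proof.
move=> [NN [cNN net]] I lt [wf [trans [irr [tri [unc segc]]]]] s cvs.
have [f finj] := countable_injP _ cNN.
pose e (k : nat) : set X :=
  if pselect (exists N, NN N /\ f N = k) is left P then projT1 (cid P) else set0.
have eN : forall N, NN N -> e (f N) = N.
  move=> N NNN; rewrite /e; case: pselect => [P|]; last by move=> []; exists N.
  case: (cid P) => N' [NN' fN'] /=; apply: finj; rewrite ?inE //.
pose h (a : I) (k : nat) : option nat :=
  if pselect (exists n, e k (s a n)) is left P then Some (projT1 (cid P)) else None.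
have hS : forall a k n, h a k = Some n -> e k (s a n).
  move=> a k n; rewrite /h; case: pselect => // P; case: (cid P) => m Hm /= [<-] //.
have hE : forall a k n, e k (s a n) -> exists m, h a k = Some m.
  move=> a k n H; rewrite /h; case: pselect => [P|]; first by eexists.
  by case; exists n.
pose C (b : I) (k : nat) := [set a | map (h a) (iota 0 k) = map (h b) (iota 0 k)].
have Cb : forall b k, C b k b by [].
have Cmon : forall b k j, (k <= j)%N -> C b j `<=` C b k.
  move=> b k j kj a; rewrite /C /=.
  rewrite -(subnKC kj) (iotaD 0 k (j - k)) !map_cat => /eqP.
  by rewrite ?map_cat eqseq_cat ?size_map // => /andP[/eqP -> _].
have Ch : forall b k a, C b k.+1 a -> h a k = h b k.
  move=> b k a; rewrite /C -[k.+1]addn1 (iotaD 0 k 1) !map_cat => /eqP.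
  by rewrite ?map_cat eqseq_cat ?size_map // => /andP[_ /eqP [->]].
have [b Cunc] : exists b, forall k, ~ countable (C b k).
  apply: contrapT => Hn; apply: unc.
  pose P (kp : nat * seq (option nat)) := [set a | map (h a) (iota 0 kp.1) = kp.2].
  pose D := [set kp | countable (P kp)].
  have cU := bigcup_countable (countableP D) (fun i (Di : D i) => Di).
  apply: sub_countable cU; apply: subset_card_le => a _.
  have [k ck] : exists k, countable (C a k).
    by apply: contrapT => H; apply: Hn; exists a => k ck; apply: H; exists k.
  by exists (k, map (h a) (iota 0 k)).
have sel : forall k (y : I), {z | C b k.+1 z /\ lt y z}.
  move=> k y; apply: cid; apply: contrapT => H; apply: (Cunc k.+1).
  have cS := @countableU2 _ _ _ (segc y) (countable1 y); move: cS; apply: sub_countable.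
  apply: subset_card_le => z Cz.
  case: (tri y z) => [yz|->|zy]; [by case: H; exists z|by right|by left].
pose a := fix a (k : nat) : I := match k with 0 => b | k.+1 => proj1_sig (sel k (a k)) end.
have a0 : a 0%N = b by [].
have aS : forall k, a k.+1 = proj1_sig (sel k (a k)) by [].
clearbody a.
have aC : forall k, C b k (a k).
  case=> [|k]; first by rewrite a0.
  by rewrite aS; case: (sel k (a k)) => z [].
have aL : forall k, lt (a k) (a k.+1).
  by move=> k; rewrite aS; case: (sel k (a k)) => z [].
have alt : forall j k, (j < k)%N -> lt (a j) (a k).
  move=> j k; elim: k => // k IH; rewrite ltnS leq_eqVlt => /orP[/eqP->|/IH H].
    exact: aL.
  exact: trans H (aL k).
have ainj : injective a.
  move=> j k ajk; case: (ltngtP j k) => // [/alt|/alt]; rewrite ajk; by move/irr.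
exists (range a); split; [|split].
- apply: sub_countable (card_image_le a setT) _; exact: countableP.
- move=> fin; apply: infinite_nat.
  have := finite_preimage (B := range a) (f := a) _ fin.
  rewrite (_ : a @^-1` range a = setT); last by apply/seteqP; split => // n _; exists n.
  by apply; move=> ? ? _ _; apply: ainj.
- move=> O nO.
  have [N NNN [NO [n Nn]]] := net O nO (s b) (cvs b).
  rewrite -(eN N NNN) in Nn.
  have [m hm] := hE _ _ _ Nn.
  exists m; apply: sub_finite_set (finite_image a (finite_II (f N).+1)).
  move=> _ [[j _ <-] nOj].
  exists j => //; rewrite /= ltnNge; apply/negP => Hj; apply: nOj.
  apply: NO; rewrite -(eN N NNN); apply: hS.
  rewrite (Ch b) //; exact: (Cmon b (f N).+1 j Hj).
Qed.
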